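(* Let $(\beta_k)_{k\in\mathbb{N}}$ be a sequence of real numbers. The multi-indexed sequence $$\bar F_{n_1,\ldots,n_d}=\prod_{k=1}^d\beta_k^{n_{(d-k+1)}-n_{(d-k)}},\qquad n_1,\ldots,n_d\in\mathbb{N}_0,$$ is a $d$-dimensional discrete survival function for every $d\ge2$ if and only if $(1,\beta_1,\beta_2,\ldots)\in\mathcal{M}_\infty$. In that case it defines, for each $d$, an infinitely extendible exchangeable wide-sense geometric law.
   Context: $\mathbb{N}_0=\{0,1,\ldots\}$; $n_{(0)}:=0\le n_{(1)}\le\cdots\le n_{(d)}$ is the ordered list of $n_1,\ldots,n_d$; $0^0:=1$. A discrete survival function is $\mathbb{P}(\tau_1>n_1,\ldots,\tau_d>n_d)$ for some $\mathbb{N}^d$-valued random vector. $\nabla^jx_k:=\sum_{i=0}^j(-1)^i\binom{j}{i}x_{k+i}$; $\mathcal{M}_\infty:=\{(x_k)_{k\in\mathbb{N}_0}: x_0=1,\ x_1<1,\ \nabla^jx_k\ge0\ \forall j,k\in\mathbb{N}_0\}$. Wide-sense geometric law: for $\tilde p_I\in[0,1]$, $I\subseteq\{1,\ldots,d\}$, $\sum_I\tilde p_I=1$, $\sum_{I\not\ni k}\tilde p_I<1$, run i.i.d. trials with outcome $I$ of probability $\tilde p_I$, $\tilde E_I$ the first trial with outcome $I$, $\tau_k=\min\{\tilde E_I:k\in I\}$. Infinitely extendible: there exists an infinite exchangeable sequence $(\tau_k)_{k\in\mathbb{N}}$ such that $(\tau_1,\ldots,\tau_m)$ is exchangeable wide-sense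 geometric for every $m$ and $(\tau_1,\ldots,\tau_d)$ has the given law. *)

(* Defs.v *)
From Stdlib Require Import Bool Reals Arith List Permutation.
Import ListNotations.
Open Scope R_scope.

Definition sumR (l : list R) : R := fold_right Rplus 0 l.
Definition prodR (l : list R) : R := fold_right Rmult 1 l.

Fixpoint prod_upto (m : nat) (f : nat -> R) : R :=
  match m with O => 1 | S m' => prod_upto m' f * f (S m') end.

Fixpoint insert_nat (a : nat) (l : list nat) : list nat :=
  match l with
  | [] => [a]
  | b :: l' => if Nat.leb a b then a :: l else b :: insert_nat a l'
  end.
Fixpoint isort (l : list nat) : list nat :=
  match l with [] => [] | a :: l' => insert_nat a (isort l') end.

(* order statistics: ostat n 0 = 0, ostat n j = j-th smallest of n (j>=1) *)
Definition ostat (n : list nat) (j : nat) : nat :=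
  match j with O => O | S j' => nth j' (isort n) O end.

(* A point (n_1,...,n_d) of N_0^d is a list of length d. *)
(* bar F_{n_1..n_d} = prod_{k=1}^d beta_k ^ (n_(d-k+1) - n_(d-k)); pow 0 0 = 1. *)
Definition Fbar (beta : nat -> R) (n : list nat) : R :=
  let d := length n in
  prod_upto d (fun k => beta k ^ (ostat n (d - k + 1) - ostat n (d - k))).

Fixpoint box (d N : nat) : list (list nat) :=
  match d with
  | O => [[]]
  | S d' => flat_map (fun a => map (cons a) (box d' N)) (seq 1 N)
  end.

Fixpoint all_gt (m n : list nat) : bool :=
  match m, n with
  | [], [] => true
  | a :: m', b :: n' => Nat.ltb b a && all_gt m' n'
  | _, _ => false
  end.

Definition boxsum (d N : nat) (p : list nat -> R) (P : list nat -> bool) : R :=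
  sumR (map p (filter P (box d N))).

(* F (on N_0^d) is P(tau_1>n_1,...,tau_d>n_d) for an N^d-valued random vector
   tau (N = {1,2,...}), described by its probability mass function p on N^d;
   series of nonnegative terms over N^d are the limits of the sums over the
   boxes {1..N}^d. *)
Definition is_discrete_survival (d : nat) (F : list nat -> R) : Prop :=
  exists p : list nat -> R,
    (forall m, 0 <= p m) /\
    Un_cv (fun N => boxsum d N p (fun _ => true)) 1 /\
    (forall n, length n = d ->
       Un_cv (fun N => boxsum d N p (fun m => all_gt m n)) (F n)).

Definition nabla (j : nat) (x : nat -> R) (k : nat) : R :=
  sum_f_R0 (fun i => (-1) ^ i * Binomial.C j i * x (k + i)%nat) j.

Definition M_inf (x : nat -> R) : Prop :=
  x O = 1 /\ x 1%nat < 1 /\ forall j k : nat, 0 <= nabla j x k.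

(* the sequence (1, beta_1, beta_2, ...); beta 0 is unused *)
Definition seq_one_beta (beta : nat -> R) (k : nat) : R :=
  match k with O => 1 | _ => beta k end.

(* a subset o of {1,...,d} is a bool list of length d: nth k o = (k+1 \in o) *)
Fixpoint subsets (d : nat) : list (list bool) :=
  match d with
  | O => [[]]
  | S d' => flat_map (fun b => map (cons b) (subsets d')) [true; false]
  end.

(* all outcome sequences of the first M trials *)
Fixpoint words (d M : nat) : list (list (list bool)) :=
  match M with
  | O => [[]]
  | S M' => flat_map (fun o => map (cons o) (words d M')) (subsets d)
  end.

Definition wsg_params (d : nat) (pt : list bool -> R) : Prop :=
  (forall o, In o (subsets d) -> 0 <= pt o <= 1) /\
  sumR (map pt (subsets d)) = 1 /\
  (forall k, (k < d)%nat ->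
     sumR (map pt (filter (fun o => negb (nth k o false)) (subsets d))) < 1).

(* trial number t (t >= 1) with outcome o is compatible with
   {tau_k > n_k for all k}: if t <= n_k then k \notin o *)
Definition trial_ok (t : nat) (o : list bool) (n : list nat) : bool :=
  forallb (fun k => orb (Nat.ltb (nth k n O) t) (negb (nth k o false)))
          (seq 0 (length n)).

Fixpoint ok_from (t : nat) (w : list (list bool)) (n : list nat) : bool :=
  match w with
  | [] => true
  | o :: w' => trial_ok t o n && ok_from (S t) w' n
  end.

(* P(tau_1>n_1,...,tau_d>n_d) for tau_k = min{E_I : k in o}, computed as the
   probability (under the i.i.d. product law) of the event, which depends only
   on the first max(n) trials *)
Definition wsg_surv (d : nat) (pt : list bool -> R) (n : list nat) : R :=
  sumR (map (fun w => prodR (map pt w))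
            (filter (fun w => ok_from 1 w n) (words d (list_max n)))).

Definition is_wsg (d : nat) (F : list nat -> R) : Prop :=
  exists pt, wsg_params d pt /\
    forall n, length n = d -> F n = wsg_surv d pt n.

Definition exchangeable (d : nat) (F : list nat -> R) : Prop :=
  forall n n', length n = d -> Permutation n n' -> F n = F n'.

(* infinite extendibility, via the consistent family (G m)_m of the
   finite-dimensional survival functions of (tau_1,...,tau_m) *)
Definition inf_ext_exch_wsg (d : nat) (F : list nat -> R) : Prop :=
  exists G : nat -> list nat -> R,
    (forall m, (1 <= m)%nat -> is_wsg m (G m) /\ exchangeable m (G m)) /\
    (forall m n, (1 <= m)%nat -> length n = m -> G (S m) (n ++ [O]) = G m n) /\
    (forall n, length n = d -> G d n = F n).

(* Main.v *)
Require Import Defs.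
From Stdlib Require Import Reals Arith List.
From Stdlib Require Import Permutation Lia Lra Bool.
Import ListNotations.
Open Scope R_scope.


Lemma C_nn n : Binomial.C n n = 1.
Proof. unfold Binomial.C. rewrite Nat.sub_diag. simpl. field. apply not_0_INR. apply fact_neq_0. Qed.
Lemma C_n0 n : Binomial.C n 0 = 1.
Proof. unfold Binomial.C. rewrite Nat.sub_0_r. simpl. field. apply not_0_INR. apply fact_neq_0. Qed.

Lemma sum_opp f n : sum_f_R0 (fun i => - f i) n = - sum_f_R0 f n.
Proof. induction n; simpl; [ring| rewrite IHn; ring]. Qed.

Lemma nabla_S j x k : nabla (S j) x k = nabla j x k - nabla j x (S k).
Proof.
  unfold nabla. rewrite tech5.
  set (D := fun i => match i with 0%nat => 0 | S i' => (-1)^i * Binomial.C j i' * x (k+i)%nat end).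
  rewrite (sum_eq _ (fun i => (-1)^i * Binomial.C j i * x (k+i)%nat + D i)).
  2:{ intros i Hi. unfold D. destruct i.
      - rewrite !C_n0. ring.
      - rewrite <- (Binomial.pascal j i) by lia. ring. }
  rewrite plus_sum.
  destruct j.
  - simpl. rewrite !C_nn, ?Nat.add_0_r. try replace (k+1)%nat with (S k) by lia. simpl. rewrite ?Nat.add_0_r. ring.
  - rewrite (decomp_sum D) by lia. simpl pred. unfold D at 1.
    rewrite (tech5 (fun i => (-1)^i * Binomial.C (S j) i * x (S k + i)%nat)).
    rewrite (sum_eq (fun i => D (S i)) (fun i => - ((-1)^i * Binomial.C (S j) i * x (S k + i)%nat))).
    2:{ intros i Hi. unfold D. replace (k + S i)%nat with (S k + i)%nat by lia. simpl. ring. }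
    rewrite sum_opp.
    rewrite !C_nn. replace (k + S (S j))%nat with (S k + S j)%nat by lia. simpl. ring.
Qed.

Lemma sumR_app l1 l2 : sumR (l1 ++ l2) = sumR l1 + sumR l2.
Proof. induction l1; simpl; [ring| rewrite IHl1; ring]. Qed.
Lemma prodR_app l1 l2 : prodR (l1 ++ l2) = prodR l1 * prodR l2.
Proof. induction l1; simpl; [ring| rewrite IHl1; ring]. Qed.

Lemma sum_filter {A} (h : A -> R) P l :
  sumR (map h (filter P l)) = sumR (map (fun x => if P x then h x else 0) l).
Proof. induction l; simpl; auto. destruct (P a); simpl; rewrite IHl; ring. Qed.

Lemma sumR_ext {A} (f g : A -> R) l : (forall x, In x l -> f x = g x) ->
  sumR (map f l) = sumR (map g l).
Proof. intros H; now rewrite (map_ext_in f g l H). Qed.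

Lemma sumR_plus {A} (f g : A -> R) l : sumR (map (fun x => f x + g x) l) = sumR (map f l) + sumR (map g l).
Proof. induction l; simpl; [ring| rewrite IHl; ring]. Qed.
Lemma sumR_scal {A} (f : A -> R) c l : sumR (map (fun x => c * f x) l) = c * sumR (map f l).
Proof. induction l; simpl; [ring| rewrite IHl; ring]. Qed.
Lemma sumR_zero {A} (l : list A) : sumR (map (fun _ => 0) l) = 0.
Proof. induction l; simpl; [ring| rewrite IHl; ring]. Qed.

Lemma sumR_nonneg {A} (f : A -> R) l : (forall x, In x l -> 0 <= f x) -> 0 <= sumR (map f l).
Proof. induction l; simpl; intros H; [lra|]. pose proof (H a (or_introl eq_refl)).
  assert (0 <= sumR (map f l)) by (apply IHl; auto). lra. Qed.
Lemma sumR_le {A} (f g : A -> R) l : (forall x, In x l -> f x <= g x) -> sumR (map f l) <= sumR (map g l).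
Proof. induction l; simpl; intros H; [lra|]. pose proof (H a (or_introl eq_refl)).
  assert (sumR (map f l) <= sumR (map g l)) by (apply IHl; auto). lra. Qed.
Lemma elem_le_sum {A} (f : A -> R) l x : In x l -> (forall y, In y l -> 0 <= f y) -> f x <= sumR (map f l).
Proof. induction l; simpl; intros Hx H; [tauto|]. destruct Hx as [<-|Hx].
  - assert (0 <= sumR (map f l)) by (apply sumR_nonneg; auto). lra.
  - pose proof (H a (or_introl eq_refl)). assert (f x <= sumR (map f l)) by (apply IHl; auto). lra. Qed.

Lemma sumR_flat_map {A B} (g : B -> R) (F : A -> list B) l :
  sumR (map g (flat_map F l)) = sumR (map (fun a => sumR (map g (F a))) l).
Proof. induction l; simpl; auto. rewrite map_app, sumR_app, IHl. ring. Qed.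

Lemma sumR_swap {A B} (h : A -> B -> R) (K : list A) (W : list B) :
  sumR (map (fun w => sumR (map (fun k => h k w) K)) W) = sumR (map (fun k => sumR (map (fun w => h k w) W)) K).
Proof. induction K as [|k K IH].
  - exact (sumR_zero W).
  - rewrite (sumR_ext _ (fun w => h k w + sumR (map (fun k0 => h k0 w) K))) by reflexivity.
    rewrite sumR_plus, IH. reflexivity. Qed.

Lemma forallb_seq_S (g : nat -> bool) d : forallb g (seq 0 (S d)) = g 0%nat && forallb (fun k => g (S k)) (seq 0 d).
Proof. simpl. f_equal. rewrite <- seq_shift. induction (seq 0 d); simpl; auto. now rewrite IHl. Qed.
Lemma filter_seq_S (g : nat -> bool) d : length (filter g (seq 0 (S d))) = ((if g 0%nat then 1 else 0) + length (filter (fun k => g (S k)) (seq 0 d)))%nat.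
Proof. cbn [seq filter]. rewrite <- seq_shift.
  assert (H : forall l, length (filter g (map S l)) = length (filter (fun k => g (S k)) l)).
  { induction l; simpl; auto. destruct (g (S a)); simpl; auto. }
  destruct (g 0%nat); simpl; rewrite H; auto. Qed.

Fixpoint cntT (o : list bool) : nat := match o with [] => 0 | b :: o' => ((if b then 1 else 0) + cntT o')%nat end.
Fixpoint cntF (o : list bool) : nat := match o with [] => 0 | b :: o' => ((if b then 0 else 1) + cntF o')%nat end.

Lemma mobius (b : nat -> R) d : forall f a c,
  sumR (map (fun o => nabla (c + cntT o) b (a + cntF o))
     (filter (fun o => forallb (fun k => f k || negb (nth k o false)) (seq 0 d)) (subsets d)))
  = nabla c b (a + length (filter (fun k => negb (f k)) (seq 0 d))).
Proof.
  induction d; intros f a c.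
  - simpl. rewrite !Nat.add_0_r. ring.
  - rewrite sum_filter. simpl subsets. rewrite app_nil_r, map_app, sumR_app, !map_map.
    rewrite filter_seq_S.
    match goal with |- sumR (map ?F1 ?l) + sumR (map ?F2 ?l) = _ =>
    rewrite (sumR_ext F1 (fun o => if (f 0%nat) && forallb (fun k => f (S k) || negb (nth k o false)) (seq 0 d)
         then nabla (S c + cntT o) b (a + cntF o) else 0))
     by (intros o _; rewrite forallb_seq_S; simpl; destruct (f 0%nat); simpl; destruct (forallb (fun k => f (S k) || negb (nth k o false)) (seq 0 d)); auto; f_equal; lia);
    rewrite (sumR_ext F2 (fun o => if forallb (fun k => f (S k) || negb (nth k o false)) (seq 0 d)
         then nabla (c + cntT o) b (S a + cntF o) else 0))
     by (intros o _; rewrite forallb_seq_S; simpl; rewrite orb_true_r; simpl; destruct (forallb (fun k => f (S k) || negb (nth k o false)) (seq 0 d)); auto; f_equal; lia)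
    end.
    rewrite <- (sum_filter _ (fun o => forallb (fun k => f (S k) || negb (nth k o false)) (seq 0 d))).
    rewrite IHd.
    destruct (f 0%nat).
    + rewrite (sumR_ext (fun o => if true && _ then _ else _) (fun o => if forallb (fun k => f (S k) || negb (nth k o false)) (seq 0 d)
         then nabla (S c + cntT o) b (a + cntF o) else 0)) by reflexivity.
      rewrite <- (sum_filter _ (fun o => forallb (fun k => f (S k) || negb (nth k o false)) (seq 0 d))), IHd.
      rewrite (nabla_S c b). simpl negb. cbv iota. rewrite Nat.add_0_l. replace (S a + _)%nat with (S (a + length (filter (fun k : nat => negb (f (S k))) (seq 0 d)))) by lia. ring.
    + rewrite (sumR_ext (fun o => if false && _ then _ else _) (fun o => 0)) by reflexivity.
      rewrite sumR_zero. simpl negb. rewrite Rplus_0_l. f_equal. simpl. lia.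
Qed.

Fixpoint okf (al : nat -> list bool -> bool) (t : nat) (w : list (list bool)) : bool :=
  match w with [] => true | o :: w' => al t o && okf al (S t) w' end.

Lemma words_prod d (pt : list bool -> R) al M : forall t,
  sumR (map (fun w => prodR (map pt w)) (filter (okf al t) (words d M)))
  = prodR (map (fun s => sumR (map pt (filter (al s) (subsets d)))) (seq t M)).
Proof.
  induction M; intros t.
  - simpl. ring.
  - rewrite sum_filter. cbn [words]. rewrite sumR_flat_map.
    rewrite (sumR_ext _ (fun o => (if al t o then pt o else 0) *
       sumR (map (fun w => prodR (map pt w)) (filter (okf al (S t)) (words d M))))).
    2:{ intros o _. rewrite map_map. rewrite sum_filter. cbn [okf].
        destruct (al t o); simpl.
        - rewrite <- sumR_scal. apply sumR_ext. intros w _. destruct (okf al (S t) w); simpl; ring.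
        - rewrite sumR_zero. ring. }
    rewrite IHM.
    rewrite (sumR_ext _ (fun o => prodR (map (fun s => sumR (map pt (filter (al s) (subsets d)))) (seq (S t) M)) * (if al t o then pt o else 0))) by (intros; ring).
    rewrite sumR_scal. rewrite <- sum_filter. cbn [seq map prodR fold_right]. unfold prodR. simpl. ring.
Qed.

Lemma prod_upto_seq M f : prod_upto M f = prodR (map f (seq 1 M)).
Proof. induction M; [reflexivity|]. cbn [prod_upto]. rewrite seq_S, map_app, prodR_app, <- IHM. simpl. ring. Qed.

Lemma prod_upto_ext m f g : (forall k, (1 <= k <= m)%nat -> f k = g k) -> prod_upto m f = prod_upto m g.
Proof. induction m; intros H; simpl; auto. rewrite IHm by (intros; apply H; lia). rewrite H by lia. auto. Qed.

Lemma prod_upto_add m n f : prod_upto (m + n) f = prod_upto m f * prod_upto n (fun i => f (m + i)%nat).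
Proof. induction n; simpl. - rewrite Nat.add_0_r. ring. - rewrite Nat.add_succ_r. simpl. rewrite IHn. ring. Qed.

Lemma prod_upto_const m c : prod_upto m (fun _ => c) = c ^ m.
Proof. induction m; simpl; auto. rewrite IHm. ring. Qed.

Lemma prod_upto_nonneg m f : (forall k, 0 <= f k) -> 0 <= prod_upto m f.
Proof. intros H; induction m; simpl; [lra|]. apply Rmult_le_pos; auto. Qed.

Lemma In_box d N m : In m (box d N) <-> length m = d /\ Forall (fun x => 1 <= x <= N)%nat m.
Proof.
  revert m; induction d; intros m; simpl.
  - split. + intros [<-|[]]. auto. + intros [H _]. destruct m; [auto|discriminate].
  - rewrite in_flat_map. split.
    + intros [a [Ha Hm]]. apply in_map_iff in Hm. destruct Hm as [m' [<- Hm']].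
      apply IHd in Hm'. apply in_seq in Ha. simpl. split; [lia|]. constructor; [lia|tauto].
    + intros [Hl HF]. destruct m as [|a m']; [discriminate|]. inversion HF; subst.
      exists a. split; [apply in_seq; lia|]. apply in_map. apply IHd. simpl in Hl. split; auto.
Qed.

Lemma NoDup_map_cons {A} (a : A) l : NoDup l -> NoDup (map (cons a) l).
Proof. induction 1; simpl; constructor; auto. rewrite in_map_iff. intros [y [Hy Hin]]. inversion Hy; subst; auto. Qed.

Lemma NoDup_box d N : NoDup (box d N).
Proof.
  induction d; simpl. - constructor; [auto|constructor].
  - generalize (seq_NoDup N 1). induction (seq 1 N) as [|a l IH]; simpl; intros Hl; [constructor|].
    inversion Hl; subst. apply NoDup_app; auto using NoDup_map_cons.
    intros x Hx Hx'. apply in_map_iff in Hx. destruct Hx as [y [<- _]].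
    apply in_flat_map in Hx'. destruct Hx' as [a' [Ha' Hy]]. apply in_map_iff in Hy.
    destruct Hy as [z [Hz _]]. inversion Hz; subst. auto.
Qed.

Lemma box_mono d N N' (g : list nat -> R) : (N <= N')%nat -> (forall m, 0 <= g m) ->
  sumR (map g (box d N)) <= sumR (map g (box d N')).
Proof.
  intros HN; revert g; induction d; intros g Hg; simpl; [lra|].
  rewrite !sumR_flat_map.
  apply Rle_trans with (sumR (map (fun a => sumR (map g (map (cons a) (box d N')))) (seq 1 N))).
  - apply sumR_le. intros a _. rewrite !map_map. apply IHd. auto.
  - replace N' with (N + (N' - N))%nat by lia. rewrite seq_app, map_app, sumR_app.
    assert (0 <= sumR (map (fun a => sumR (map g (map (cons a) (box d (N + (N' - N)))))) (seq (1 + N) (N' - N)))).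
    { apply sumR_nonneg. intros; apply sumR_nonneg. intros; auto. }
    lra.
Qed.

Definition cntL (n : list nat) (t : nat) : nat := length (filter (fun x => Nat.leb t x) n).

Lemma insert_perm a l : Permutation (insert_nat a l) (a :: l).
Proof. induction l; simpl; auto. destruct (Nat.leb a a0); auto.
  eapply perm_trans; [apply perm_skip; exact IHl| apply perm_swap]. Qed.
Lemma isort_perm l : Permutation (isort l) l.
Proof. induction l; simpl; auto. eapply perm_trans; [apply insert_perm| apply perm_skip; auto]. Qed.

Fixpoint srt (l : list nat) : Prop := match l with [] => True | a :: l' => Forall (fun x => a <= x)%nat l' /\ srt l' end.

Lemma Forall_insert (P : nat -> Prop) a l : P a -> Forall P l -> Forall P (insert_nat a l).
Proof. intros Ha Hl. eapply Permutation_Forall; [symmetry; apply insert_perm|]. constructor; auto. Qed.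

Lemma srt_insert a l : srt l -> srt (insert_nat a l).
Proof.
  induction l as [|b l IH]; simpl; intros H; [split; auto|].
  destruct H as [Hb Hl]. destruct (Nat.leb a b) eqn:E.
  - apply Nat.leb_le in E. simpl. split; [|split; auto]. constructor; auto.
    eapply Forall_impl; [|exact Hb]. intros; simpl in *; lia.
  - apply Nat.leb_gt in E. simpl. split; [|auto]. apply Forall_insert; auto. lia.
Qed.
Lemma srt_isort l : srt (isort l).
Proof. induction l; simpl; auto. apply srt_insert; auto. Qed.

Lemma cntL_perm n n' t : Permutation n n' -> cntL n t = cntL n' t.
Proof. unfold cntL. induction 1; simpl; auto.
  - destruct (Nat.leb t x); simpl; auto.
  - destruct (Nat.leb t x), (Nat.leb t y); simpl; auto.
  - lia. Qed.

Definition nth' (s : list nat) (u j : nat) : nat := match j with O => u | S j' => nth j' s O end.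

Lemma prod_upto_S m f : prod_upto (S m) f = prod_upto m f * f (S m).
Proof. reflexivity. Qed.

Lemma nth'_cons a s u j : nth' (a :: s) u (S j) = nth' s a j.
Proof. destruct j; reflexivity. Qed.

Definition Hf (b : nat -> R) (s : list nat) (u : nat) : R :=
  prod_upto (length s) (fun k => b k ^ (nth' s u (length s - k + 1) - nth' s u (length s - k))).

Lemma cntL_all s t : Forall (fun x => t <= x)%nat s -> cntL s t = length s.
Proof. unfold cntL. induction 1; simpl; auto. apply Nat.leb_le in H. rewrite H. simpl. auto. Qed.

Lemma main_order (b : nat -> R) (hb0 : b O = 1) s : forall u T,
  srt s -> Forall (fun x => u <= x)%nat s -> Forall (fun x => x <= u + T)%nat s ->
  prod_upto T (fun i => b (cntL s (u + i))) = Hf b s u.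
Proof.
  induction s as [|a s IH]; intros u T Hs Hu HT.
  - unfold Hf. simpl. rewrite (prod_upto_ext T _ (fun _ => 1)) by (intros; unfold cntL; simpl; auto).
    rewrite prod_upto_const. apply pow1.
  - simpl in Hs. destruct Hs as [Ha Hs]. inversion Hu; subst. inversion HT; subst.
    replace T with ((a - u) + (u + T - a))%nat by lia.
    rewrite prod_upto_add.
    rewrite (prod_upto_ext (a - u) _ (fun _ => b (length (a :: s)))).
    2:{ intros k Hk. f_equal. apply cntL_all. constructor; [lia|]. eapply Forall_impl; [|exact Ha]. intros; simpl in *; lia. }
    rewrite prod_upto_const.
    rewrite (prod_upto_ext _ _ (fun i => b (cntL s (a + i)))).
    2:{ intros k Hk. f_equal. replace (u + (a - u + k))%nat with (a + k)%nat by lia. unfold cntL. simpl. replace (Nat.leb (a + k) a) with false.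
        - reflexivity.
        - symmetry. apply Nat.leb_gt. lia. }
    rewrite (IH a (u + T - a)%nat); auto.
    2:{ eapply Forall_impl; [|exact H4]. intros; simpl in *; lia. }
    unfold Hf. change (length (a::s)) with (S (length s)). rewrite prod_upto_S.
    replace (S (length s) - S (length s) + 1)%nat with 1%nat by lia. rewrite Nat.sub_diag. change (nth' (a::s) u 1) with a. change (nth' (a::s) u 0) with u.
    rewrite Rmult_comm. f_equal.
    apply prod_upto_ext. intros k Hk.
    replace (S (length s) - k + 1)%nat with (S (length s - k + 1)) by lia.
    replace (S (length s) - k)%nat with (S (length s - k)) by lia.
    rewrite !nth'_cons. reflexivity.
Qed.

Lemma Fbar_prod beta n T : Forall (fun x => x <= T)%nat n ->
  Fbar beta n = prod_upto T (fun t => seq_one_beta beta (cntL n t)).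
Proof.
  intros HT.
  assert (Hp := isort_perm n).
  rewrite (prod_upto_ext T _ (fun i => seq_one_beta beta (cntL (isort n) (0 + i)))).
  2:{ intros; simpl. f_equal. apply cntL_perm. symmetry; auto. }
  rewrite main_order; auto.
  - unfold Hf, Fbar. rewrite (Permutation_length Hp).
    apply prod_upto_ext. intros k Hk. destruct k; [lia|]. simpl seq_one_beta. f_equal.
  - apply srt_isort.
  - apply Forall_forall. intros; lia.
  - eapply Permutation_Forall; [symmetry; exact Hp|]. auto.
Qed.

Lemma nabla0 x k : nabla 0 x k = x k.
Proof. unfold nabla. simpl. rewrite Nat.add_0_r, C_n0. ring. Qed.

Definition ptb (beta : nat -> R) (o : list bool) : R := nabla (cntT o) (seq_one_beta beta) (cntF o).

Lemma mobius0 beta d f :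
  sumR (map (ptb beta) (filter (fun o => forallb (fun k => f k || negb (nth k o false)) (seq 0 d)) (subsets d)))
  = seq_one_beta beta (length (filter (fun k => negb (f k)) (seq 0 d))).
Proof. pose proof (mobius (seq_one_beta beta) d f 0 0) as H. simpl in H. rewrite nabla0 in H. exact H. Qed.

Lemma ftrue {A} (P : A -> bool) l : (forall x, P x = true) -> filter P l = l.
Proof. intros H; induction l; simpl; auto. rewrite H, IHl; auto. Qed.


Lemma ffalse {A} (P : A -> bool) l : (forall x, P x = false) -> filter P l = [].
Proof. intros H; induction l; simpl; auto. rewrite H, IHl; auto. Qed.

Lemma sum_all beta d : sumR (map (ptb beta) (subsets d)) = 1.
Proof.
  pose proof (mobius0 beta d (fun _ => true)) as H.
  rewrite ftrue in H by (intros; apply forallb_forall; auto).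
  rewrite H, ffalse; auto.
Qed.


Lemma count_eq k d : (k < d)%nat -> length (filter (fun k' => Nat.eqb k' k) (seq 0 d)) = 1%nat.
Proof.
  intros Hk. replace d with (k + (1 + (d - k - 1)))%nat by lia.
  rewrite !seq_app, !filter_app, !length_app. simpl.
  rewrite Nat.eqb_refl. simpl.
  assert (H1 : forall l, (forall x, In x l -> x <> k) -> length (filter (fun k' => Nat.eqb k' k) l) = 0%nat).
  { induction l; simpl; intros H; auto. destruct (Nat.eqb_spec a k); [exfalso; apply (H a); auto|]. apply IHl; auto. }
  rewrite !H1; auto; intros x Hx; apply in_seq in Hx; lia.
Qed.

Lemma sum_avoid beta d k : (k < d)%nat ->
  sumR (map (ptb beta) (filter (fun o => negb (nth k o false)) (subsets d))) = seq_one_beta beta 1.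
Proof.
  intros Hk. pose proof (mobius0 beta d (fun k' => negb (Nat.eqb k' k))) as H.
  rewrite (filter_ext _ (fun o => negb (nth k o false))) in H.
  - rewrite H. f_equal. rewrite (filter_ext _ (fun k' => Nat.eqb k' k)). apply count_eq; auto.
    intros; apply negb_involutive.
  - intros o. destruct (nth k o false) eqn:E; simpl.
    + apply Bool.not_true_iff_false. rewrite forallb_forall. intros Hall.
      specialize (Hall k ltac:(apply in_seq; lia)). rewrite Nat.eqb_refl, E in Hall. discriminate.
    + apply forallb_forall. intros x Hx. destruct (Nat.eqb_spec x k); subst; simpl; auto. rewrite E; auto.
Qed.

Lemma count_index (g : nat -> bool) n : length (filter (fun k => g (nth k n O)) (seq 0 (length n))) = length (filter g n).
Proof.
  induction n as [|a n IH]; auto. cbn [length]. rewrite filter_seq_S. simpl nth. rewrite IH.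
  simpl. destruct (g a); auto.
Qed.

Lemma sum_trial beta n t :
  sumR (map (ptb beta) (filter (fun o => trial_ok t o n) (subsets (length n)))) = seq_one_beta beta (cntL n t).
Proof.
  unfold trial_ok. rewrite mobius0. f_equal. unfold cntL.
  rewrite <- (count_index (fun x => Nat.leb t x) n). f_equal. apply filter_ext. intros k. rewrite Nat.leb_antisym. auto.
Qed.

Lemma ok_from_okf t w n : ok_from t w n = okf (fun t o => trial_ok t o n) t w.
Proof. revert t; induction w; simpl; intros; auto. rewrite IHw; auto. Qed.

Lemma sumW_ok beta n M :
  sumR (map (fun w => prodR (map (ptb beta) w)) (filter (fun w => ok_from 1 w n) (words (length n) M)))
  = prod_upto M (fun t => seq_one_beta beta (cntL n t)).
Proof.
  rewrite (filter_ext _ (okf (fun t o => trial_ok t o n) 1)) by (intros; apply ok_from_okf).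
  rewrite words_prod, prod_upto_seq. f_equal. apply map_ext. intros; apply sum_trial.
Qed.

Lemma wsg_Fbar beta n : Fbar beta n = wsg_surv (length n) (ptb beta) n.
Proof.
  unfold wsg_surv. rewrite sumW_ok. apply Fbar_prod. apply list_max_le. auto.
Qed.

Lemma ptb_nonneg beta : M_inf (seq_one_beta beta) -> forall o, 0 <= ptb beta o.
Proof. intros [_ [_ H]] o. apply H. Qed.

Lemma is_wsg_Fbar beta d : M_inf (seq_one_beta beta) -> is_wsg d (Fbar beta).
Proof.
  intros HM. exists (ptb beta). split.
  - split; [|split].
    + intros o Ho. split; [apply ptb_nonneg; auto|].
      rewrite <- (sum_all beta d). apply elem_le_sum; auto. intros; apply ptb_nonneg; auto.
    + apply sum_all.
    + intros k Hk. rewrite sum_avoid by auto. destruct HM as [_ [H1 _]]. exact H1.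
  - intros n Hn. rewrite <- Hn. apply wsg_Fbar.
Qed.

Lemma exch_Fbar beta d : exchangeable d (Fbar beta).
Proof.
  intros n n' _ Hp.
  assert (HF : Forall (fun x => x <= list_max n)%nat n) by (apply list_max_le; auto).
  rewrite (Fbar_prod beta n (list_max n)) by auto.
  rewrite (Fbar_prod beta n' (list_max n)) by (eapply Permutation_Forall; eauto).
  apply prod_upto_ext. intros. f_equal. apply cntL_perm; auto.
Qed.

Lemma ext_Fbar beta n : Fbar beta (n ++ [O]) = Fbar beta n.
Proof.
  assert (HF : Forall (fun x => x <= list_max n)%nat n) by (apply list_max_le; auto).
  rewrite (Fbar_prod beta n (list_max n)) by auto.
  rewrite (Fbar_prod beta (n ++ [O]) (list_max n)).
  - apply prod_upto_ext. intros k Hk. f_equal. unfold cntL. rewrite filter_app, length_app.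
    simpl. replace (Nat.leb k 0) with false by (symmetry; apply Nat.leb_gt; lia). simpl. lia.
  - apply Forall_app. split; auto. constructor; auto. lia.
Qed.

Lemma inf_ext_Fbar beta d : M_inf (seq_one_beta beta) -> inf_ext_exch_wsg d (Fbar beta).
Proof.
  intros HM. exists (fun _ => Fbar beta). split; [|split].
  - intros m _. split; [apply is_wsg_Fbar; auto| apply exch_Fbar].
  - intros m n _ _. apply ext_Fbar.
  - auto.
Qed.

Definition condM (mk t : nat) (x : bool) : bool :=
  if Nat.ltb t mk then negb x else if Nat.eqb t mk then x else true.
Definition alM d (m : list nat) (t : nat) (o : list bool) : bool :=
  forallb (fun k => condM (nth k m O) t (nth k o false)) (seq 0 d).
Definition pmf beta d (m : list nat) : R :=
  prod_upto (list_max m) (fun t => sumR (map (ptb beta) (filter (alM d m t) (subsets d)))).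
Definition piw beta (w : list (list bool)) : R := prodR (map (ptb beta) w).

Lemma pmf_nonneg beta d m : M_inf (seq_one_beta beta) -> 0 <= pmf beta d m.
Proof. intros HM. apply prod_upto_nonneg. intros; apply sumR_nonneg. intros; apply ptb_nonneg; auto. Qed.

Lemma piw_nonneg beta w : M_inf (seq_one_beta beta) -> 0 <= piw beta w.
Proof. intros HM. induction w; unfold piw; simpl; [lra|]. apply Rmult_le_pos; [apply ptb_nonneg; auto| exact IHw]. Qed.

Lemma nth_le_max m k : (nth k m O <= list_max m)%nat.
Proof.
  destruct (Nat.lt_ge_cases k (length m)).
  - assert (HF : Forall (fun x => x <= list_max m)%nat m) by (apply list_max_le; auto).
    rewrite Forall_forall in HF. apply HF. apply nth_In; auto.
  - rewrite nth_overflow by auto. lia.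
Qed.

Lemma pmf_words beta d N m : In m (box d N) ->
  pmf beta d m = sumR (map (fun w => if okf (alM d m) 1 w then piw beta w else 0) (words d N)).
Proof.
  intros Hm. apply In_box in Hm. destruct Hm as [Hl HF].
  assert (HN : (list_max m <= N)%nat).
  { apply list_max_le. eapply Forall_impl; [|exact HF]. intros; simpl in *; lia. }
  rewrite <- sum_filter. unfold piw. rewrite words_prod, <- prod_upto_seq.
  replace N with (list_max m + (N - list_max m))%nat by lia.
  rewrite prod_upto_add. unfold pmf.
  rewrite (prod_upto_ext (N - list_max m) _ (fun _ => 1)).
  - rewrite prod_upto_const, pow1. ring.
  - intros i Hi. rewrite (ftrue (alM d m (list_max m + i))). apply sum_all.
    intros o. unfold alM. apply forallb_forall. intros k _. unfold condM.
    pose proof (nth_le_max m k).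
    replace (Nat.ltb (list_max m + i) (nth k m O)) with false by (symmetry; apply Nat.ltb_ge; lia).
    replace (Nat.eqb (list_max m + i) (nth k m O)) with false by (symmetry; apply Nat.eqb_neq; lia). auto.
Qed.

Lemma okf_index al w : forall t, okf al t w = true <-> forall i, (i < length w)%nat -> al (t + i)%nat (nth i w []) = true.
Proof.
  induction w as [|o w IH]; intros t; simpl.
  - split; auto. intros; lia.
  - rewrite andb_true_iff, IH. split.
    + intros [H1 H2] i Hi. destruct i. * rewrite Nat.add_0_r. auto. * rewrite Nat.add_succ_r. apply H2. lia.
    + intros H. split. * specialize (H 0%nat ltac:(lia)). rewrite Nat.add_0_r in H. auto.
      * intros i Hi. specialize (H (S i) ltac:(lia)). rewrite Nat.add_succ_r in H. auto.
Qed.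

Fixpoint firsthit (k t : nat) (w : list (list bool)) : nat :=
  match w with [] => O | o :: w' => if nth k o false then t else firsthit k (S t) w' end.

Definition hit k (w : list (list bool)) i := nth k (nth i w []) false.

Lemma fh_spec k w : forall t s, (1 <= t)%nat -> (1 <= s)%nat ->
  (firsthit k t w = s <-> ((t <= s < t + length w)%nat /\ hit k w (s - t) = true /\
      forall i, (i < s - t)%nat -> hit k w i = false)).
Proof.
  unfold hit. induction w as [|o w IH]; intros t s Ht Hs; simpl.
  - split; [intros; lia| intros [H _]; lia].
  - destruct (nth k o false) eqn:E.
    + split.
      * intros <-. rewrite Nat.sub_diag. simpl. split; [lia|split; auto]. intros; lia.
      * intros [H1 [H2 H3]]. destruct (Nat.eq_dec t s); auto.
        specialize (H3 0%nat ltac:(lia)). simpl in H3. congruence.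
    + rewrite IH by lia. split.
      * intros [H1 [H2 H3]]. replace (s - t)%nat with (S (s - S t)) by lia. simpl.
        split; [lia|split; auto]. intros i Hi. destruct i; simpl; auto. apply H3. lia.
      * intros [H1 [H2 H3]]. destruct (Nat.eq_dec t s) as [<-|Hne].
        { rewrite Nat.sub_diag in H2. simpl in H2. congruence. }
        replace (s - t)%nat with (S (s - S t)) in H2, H3 by lia. simpl in H2.
        split; [lia|split; auto]. intros i Hi. apply (H3 (S i)). lia.
Qed.

Lemma fh_zero k w : forall t, (1 <= t)%nat -> (firsthit k t w = O <-> forall i, (i < length w)%nat -> hit k w i = false).
Proof.
  unfold hit. induction w as [|o w IH]; intros t Ht; simpl.
  - split; auto. intros; lia.
  - destruct (nth k o false) eqn:E.
    + split; [lia|]. intros H. specialize (H 0%nat ltac:(lia)). simpl in H. congruence.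
    + rewrite IH by lia. split.
      * intros H i Hi. destruct i; simpl; auto. apply H. lia.
      * intros H i Hi. apply (H (S i)). lia.
Qed.

Lemma fh_bound k w t : (1 <= t)%nat -> (firsthit k t w < t + length w)%nat.
Proof.
  intros Ht. destruct (firsthit k t w) eqn:E; [lia|].
  apply (fh_spec k w t (S n)) in E; lia.
Qed.

Lemma In_words d N w : In w (words d N) -> length w = N.
Proof.
  revert w; induction N; simpl; intros w Hw.
  - destruct Hw as [<-|[]]; auto.
  - apply in_flat_map in Hw. destruct Hw as [o [_ Hw]]. apply in_map_iff in Hw.
    destruct Hw as [w' [<- Hw']]. simpl. f_equal. auto.
Qed.

Lemma fh_cond k w s : (1 <= s <= length w)%nat ->
  (firsthit k 1 w = s <-> forall i, (i < length w)%nat -> condM s (1 + i) (hit k w i) = true).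
Proof.
  intros Hs. rewrite fh_spec by lia. split.
  - intros [H1 [H2 H3]] i Hi. unfold condM.
    destruct (Nat.ltb_spec (1 + i) s).
    + rewrite H3 by lia. auto.
    + destruct (Nat.eqb_spec (1 + i) s); auto. replace i with (s - 1)%nat by lia. auto.
  - intros H. split; [lia|split].
    + specialize (H (s - 1)%nat ltac:(lia)). unfold condM in H.
      replace (1 + (s - 1))%nat with s in H by lia. rewrite Nat.ltb_irrefl, Nat.eqb_refl in H. auto.
    + intros i Hi. specialize (H i ltac:(lia)). unfold condM in H.
      replace (Nat.ltb (1 + i) s) with true in H by (symmetry; apply Nat.ltb_lt; lia).
      destruct (hit k w i); auto.
Qed.

Lemma map_seq_eq (f : nat -> nat) d m : map f (seq 0 d) = m <-> (length m = d /\ forall k, (k < d)%nat -> f k = nth k m O).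
Proof.
  split.
  - intros <-. rewrite length_map, length_seq. split; auto. intros k Hk.
    rewrite (nth_indep _ O (f O)) by (rewrite length_map, length_seq; auto).
    rewrite map_nth, seq_nth; auto.
  - intros [Hl H]. apply (nth_ext _ _ O O). + rewrite length_map, length_seq; auto.
    + intros k Hk. rewrite length_map, length_seq in Hk. rewrite <- H by auto.
      rewrite (nth_indep _ O (f O)) by (rewrite length_map, length_seq; auto).
      rewrite map_nth, seq_nth; auto.
Qed.

Definition fhv d w := map (fun k => firsthit k 1 w) (seq 0 d).

Lemma okf_alM_iff d N m w : In m (box d N) -> In w (words d N) ->
  (okf (alM d m) 1 w = true <-> fhv d w = m).
Proof.
  intros Hm Hw. apply In_box in Hm. destruct Hm as [Hl HF]. apply In_words in Hw.
  rewrite Forall_forall in HF.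
  unfold fhv. rewrite map_seq_eq, okf_index. split.
  - intros H. split; auto. intros k Hk.
    assert (Hmk : (1 <= nth k m O <= N)%nat) by (apply HF, nth_In; lia).
    apply fh_cond; [lia|]. intros i Hi. specialize (H i Hi). unfold alM in H.
    rewrite forallb_forall in H. apply H. apply in_seq. lia.
  - intros [_ H] i Hi. unfold alM. apply forallb_forall. intros k Hk. apply in_seq in Hk.
    assert (Hmk : (1 <= nth k m O <= N)%nat) by (apply HF, nth_In; lia).
    specialize (H k ltac:(lia)). pose proof (proj1 (fh_cond k w (nth k m O) ltac:(lia)) H) as H0. apply H0. lia.
Qed.

Lemma sum_notin {A} (eqd : forall x y : A, {x = y} + {x <> y}) (g : A -> R) x L : ~ In x L ->
  sumR (map (fun m => if eqd m x then g m else 0) L) = 0.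
Proof. induction L; simpl; intros H; auto. destruct (eqd a x); [subst; tauto|]. rewrite IHL; auto. ring. Qed.

Lemma sum_in {A} (eqd : forall x y : A, {x = y} + {x <> y}) (g : A -> R) x L : NoDup L -> In x L ->
  sumR (map (fun m => if eqd m x then g m else 0) L) = g x.
Proof.
  induction L; simpl; intros Hd H; [tauto|]. inversion Hd; subst.
  destruct (eqd a x).
  - subst. rewrite sum_notin; auto. ring.
  - destruct H; [congruence|]. rewrite IHL; auto. ring.
Qed.

Lemma all_gt_iff m n : length m = length n -> (all_gt m n = true <-> forall k, (k < length n)%nat -> (nth k n O < nth k m O)%nat).
Proof.
  revert n; induction m as [|a m IH]; intros [|b n] Hl; simpl in *; try discriminate.
  - split; auto. intros; lia.
  - rewrite andb_true_iff, Nat.ltb_lt, IH by lia. split.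
    + intros [H1 H2] k Hk. destruct k; auto. apply H2. lia.
    + intros H. split. * apply (H 0%nat). lia. * intros k Hk. apply (H (S k)). lia.
Qed.

Lemma step5 d N n w : In w (words d N) -> In (fhv d w) (box d N) -> length n = d ->
  all_gt (fhv d w) n = ok_from 1 w n.
Proof.
  intros Hw Hb Hn. assert (HwN := In_words _ _ _ Hw).
  apply In_box in Hb. destruct Hb as [Hl HF]. rewrite Forall_forall in HF.
  assert (Hfh : forall k, (k < d)%nat -> nth k (fhv d w) O = firsthit k 1 w).
  { intros k Hk. symmetry. pose proof (proj1 (map_seq_eq (fun k => firsthit k 1 w) d (fhv d w)) eq_refl) as [_ H]. auto. }
  apply Bool.eq_iff_eq_true. rewrite all_gt_iff by congruence.
  rewrite ok_from_okf, okf_index. split.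
  - intros H i Hi. unfold trial_ok. apply forallb_forall. intros k Hk. apply in_seq in Hk.
    specialize (H k ltac:(lia)). rewrite Hfh in H by lia.
    assert (Hs : (1 <= firsthit k 1 w <= N)%nat) by (rewrite <- Hfh by lia; apply HF, nth_In; lia).
    assert (Hsp := proj1 (fh_spec k w 1 (firsthit k 1 w) ltac:(lia) ltac:(lia)) eq_refl).
    destruct Hsp as [_ [_ H3]]. fold (hit k w i).
    destruct (Nat.ltb_spec (nth k n O) (1 + i)); auto. rewrite H3 by lia. auto.
  - intros H k Hk. rewrite Hfh by lia.
    assert (Hs : (1 <= firsthit k 1 w <= N)%nat) by (rewrite <- Hfh by lia; apply HF, nth_In; lia).
    assert (Hsp := proj1 (fh_spec k w 1 (firsthit k 1 w) ltac:(lia) ltac:(lia)) eq_refl).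
    destruct Hsp as [_ [H2 _]].
    destruct (Nat.lt_ge_cases (nth k n O) (firsthit k 1 w)); auto. exfalso.
    specialize (H (firsthit k 1 w - 1)%nat ltac:(lia)). unfold trial_ok in H.
    rewrite forallb_forall in H. specialize (H k ltac:(apply in_seq; lia)).
    unfold hit in H2. replace (firsthit k 1 w - 1)%nat with (firsthit k 1 w - 1)%nat in H2 by lia. rewrite H2 in H.
    replace (1 + (firsthit k 1 w - 1))%nat with (firsthit k 1 w) in H by lia.
    rewrite orb_false_r in H. apply Nat.ltb_lt in H. lia.
Qed.

Lemma sumR_minus {A} (f g : A -> R) l : sumR (map (fun x => f x - g x) l) = sumR (map f l) - sumR (map g l).
Proof. induction l; simpl; [ring| rewrite IHl; ring]. Qed.
Lemma sumR_const {A} (c : R) (l : list A) : sumR (map (fun _ => c) l) = INR (length l) * c.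
Proof. induction l; simpl length; [simpl; ring|]. cbn [map sumR fold_right]. unfold sumR in IHl. rewrite IHl, S_INR. ring. Qed.

Definition inboxd d N w : bool := if in_dec (list_eq_dec Nat.eq_dec) (fhv d w) (box d N) then true else false.

Lemma boxsum_decomp beta d N n : length n = d ->
  boxsum d N (pmf beta d) (fun m => all_gt m n) =
  sumR (map (fun w => if ok_from 1 w n then piw beta w else 0) (words d N))
  - sumR (map (fun w => if ok_from 1 w n then (if inboxd d N w then 0 else piw beta w) else 0) (words d N)).
Proof.
  intros Hn. unfold boxsum. rewrite sum_filter.
  rewrite (sumR_ext _ (fun m => sumR (map (fun w => if list_eq_dec Nat.eq_dec m (fhv d w) then (if all_gt m n then piw beta w else 0) else 0) (words d N))) (box d N)).
  2:{ intros m Hm. rewrite (pmf_words beta d N m Hm). destruct (all_gt m n).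
      - apply sumR_ext. intros w Hw. destruct (list_eq_dec Nat.eq_dec m (fhv d w)) as [e|e].
        + replace (okf (alM d m) 1 w) with true; auto. symmetry. apply (okf_alM_iff d N m w); auto.
        + destruct (okf (alM d m) 1 w) eqn:E; auto. exfalso. apply e. symmetry. apply (okf_alM_iff d N m w); auto.
      - symmetry. rewrite (sumR_ext _ (fun _ => 0)) by (intros w _; destruct (list_eq_dec Nat.eq_dec m (fhv d w)); auto).
        apply sumR_zero. }
  rewrite <- (sumR_swap (fun m w => if list_eq_dec Nat.eq_dec m (fhv d w) then (if all_gt m n then piw beta w else 0) else 0)).
  rewrite <- sumR_minus. apply sumR_ext. intros w Hw.
  unfold inboxd. destruct (in_dec (list_eq_dec Nat.eq_dec) (fhv d w) (box d N)) as [Hi|Hi].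
  - rewrite (sum_in (list_eq_dec Nat.eq_dec) (fun m => if all_gt m n then piw beta w else 0)); auto using NoDup_box.
    rewrite (step5 d N n w); auto. destruct (ok_from 1 w n); ring.
  - rewrite (sum_notin (list_eq_dec Nat.eq_dec) (fun m => if all_gt m n then piw beta w else 0)); auto.
    destruct (ok_from 1 w n); ring.
Qed.

Lemma T1_Fbar beta n N : (list_max n <= N)%nat ->
  sumR (map (fun w => if ok_from 1 w n then piw beta w else 0) (words (length n) N)) = Fbar beta n.
Proof.
  intros HN. rewrite <- sum_filter. unfold piw. rewrite sumW_ok. symmetry. apply Fbar_prod.
  apply (proj1 (list_max_le n N) HN).
Qed.

Lemma never_sum beta d N k : (k < d)%nat ->
  sumR (map (fun w => if okf (fun _ o => negb (nth k o false)) 1 w then piw beta w else 0) (words d N))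
  = (seq_one_beta beta 1) ^ N.
Proof.
  intros Hk. rewrite <- sum_filter. unfold piw. rewrite words_prod.
  rewrite (map_ext _ (fun _ => seq_one_beta beta 1)) by (intros; apply sum_avoid; auto).
  rewrite <- prod_upto_seq, prod_upto_const. auto.
Qed.

Lemma R_bounds beta d N n : M_inf (seq_one_beta beta) ->
  0 <= sumR (map (fun w => if ok_from 1 w n then (if inboxd d N w then 0 else piw beta w) else 0) (words d N))
  <= INR d * (seq_one_beta beta 1) ^ N.
Proof.
  intros HM. split.
  - apply sumR_nonneg. intros w _. destruct (ok_from 1 w n), (inboxd d N w); try lra. apply piw_nonneg; auto.
  - apply Rle_trans with (sumR (map (fun w => sumR (map (fun k =>
        if okf (fun _ o => negb (nth k o false)) 1 w then piw beta w else 0) (seq 0 d))) (words d N))).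
    + apply sumR_le. intros w Hw. 
      assert (Hnn : forall k, 0 <= (if okf (fun _ o => negb (nth k o false)) 1 w then piw beta w else 0)).
      { intros k. destruct (okf _ 1 w); [apply piw_nonneg; auto| lra]. }
      destruct (ok_from 1 w n); [|apply sumR_nonneg; auto].
      unfold inboxd. destruct (in_dec (list_eq_dec Nat.eq_dec) (fhv d w) (box d N)) as [Hi|Hi].
      { apply sumR_nonneg; auto. }
      destruct (existsb (fun k => Nat.eqb (firsthit k 1 w) 0) (seq 0 d)) eqn:E.
      * apply existsb_exists in E. destruct E as [k [Hk Hk0]]. apply Nat.eqb_eq in Hk0.
        apply Rle_trans with (if okf (fun _ o => negb (nth k o false)) 1 w then piw beta w else 0).
        -- replace (okf (fun _ o => negb (nth k o false)) 1 w) with true; [lra|].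
           symmetry. apply okf_index. intros i Hi'. apply (proj1 (fh_zero k w 1 ltac:(lia)) Hk0) in Hi'.
           unfold hit in Hi'. rewrite Hi'. auto.
        -- apply (elem_le_sum (fun k => if okf (fun _ o => negb (nth k o false)) 1 w then piw beta w else 0)); auto.
      * exfalso. apply Hi. apply In_box. unfold fhv. rewrite length_map, length_seq. split; auto.
        apply Forall_forall. intros x Hx. apply in_map_iff in Hx. destruct Hx as [k [<- Hk]].
        pose proof (fh_bound k w 1 ltac:(lia)). rewrite (In_words _ _ _ Hw) in H.
        assert (firsthit k 1 w <> O).
        { intros H0. assert (existsb (fun k => Nat.eqb (firsthit k 1 w) 0) (seq 0 d) = true).
          { apply existsb_exists. exists k. split; auto. apply Nat.eqb_eq; auto. } congruence. }
        lia.
    + rewrite (sumR_swap (fun k w => if okf (fun _ o => negb (nth k o false)) 1 w then piw beta w else 0)).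
      rewrite (sumR_ext _ (fun _ => seq_one_beta beta 1 ^ N)).
      * rewrite sumR_const, length_seq. lra.
      * intros k Hk. apply in_seq in Hk. apply never_sum. lia.
Qed.

Lemma surv_Fbar beta d : M_inf (seq_one_beta beta) -> is_discrete_survival d (Fbar beta).
Proof.
  intros HM. exists (pmf beta d). split; [intros; apply pmf_nonneg; auto|].
  assert (Hb1 : 0 <= seq_one_beta beta 1 < 1).
  { destruct HM as [_ [Hlt Hnab]]. specialize (Hnab 0%nat 1%nat). rewrite nabla0 in Hnab. lra. }
  assert (Hcv : forall n, length n = d -> Un_cv (fun N => boxsum d N (pmf beta d) (fun m => all_gt m n)) (Fbar beta n)).
  { intros n Hn eps Heps. subst d.
    assert (Hd : 0 <= INR (length n)) by apply pos_INR.
    assert (Habs : Rabs (seq_one_beta beta 1) < 1) by (rewrite Rabs_pos_eq; lra).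
    assert (He : 0 < eps / (INR (length n) + 1)) by (apply Rdiv_lt_0_compat; lra).
    destruct (pow_lt_1_zero _ Habs _ He) as [N1 HN1].
    exists (max N1 (list_max n)). intros N HN. unfold R_dist.
    rewrite boxsum_decomp by auto. rewrite T1_Fbar by lia.
    pose proof (R_bounds beta (length n) N n HM) as [Hr1 Hr2].
    match goal with |- Rabs (_ - ?r - _) < _ => replace (Fbar beta n - r - Fbar beta n) with (- r) by ring end.
    rewrite Rabs_Ropp, Rabs_pos_eq by auto.
    specialize (HN1 N ltac:(lia)). rewrite Rabs_pos_eq in HN1 by (apply pow_le; lra).
    assert (Hx : 0 <= seq_one_beta beta 1 ^ N) by (apply pow_le; lra).
    assert (Hid : eps / (INR (length n) + 1) * (INR (length n) + 1) = eps) by (field; lra).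
    nra. }
  split.
  - assert (Heq : forall N, boxsum d N (pmf beta d) (fun _ => true) = boxsum d N (pmf beta d) (fun m => all_gt m (repeat O d))).
    { intros N. unfold boxsum. f_equal. f_equal. apply filter_ext_in. intros m Hm.
      apply In_box in Hm. destruct Hm as [Hl HF]. rewrite Forall_forall in HF. symmetry.
      apply all_gt_iff; rewrite repeat_length; auto. intros k Hk. rewrite nth_repeat.
      assert (1 <= nth k m O)%nat by (apply HF, nth_In; lia). lia. }
    assert (HF1 : Fbar beta (repeat O d) = 1).
    { rewrite (Fbar_prod beta _ 0). reflexivity. apply Forall_forall. intros x Hx. apply repeat_spec in Hx. lia. }
    intros eps Heps. destruct (Hcv (repeat O d) (repeat_length _ _) eps Heps) as [N0 H].
    exists N0. intros N HN. rewrite Heq, <- HF1. apply H; auto.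
  - exact Hcv.
Qed.

Definition cond (x a : nat) : bool :=
  match x with 0 => Nat.ltb 0 a | 1 => Nat.ltb 1 a | _ => Nat.eqb a 1 end.
Fixpoint sat (c : list nat) (m : list nat) : bool :=
  match c with [] => true | x :: c' => cond x (hd O m) && sat c' (tl m) end.
Definition cntGT c := length (filter (Nat.eqb 1) c).
Definition cntEQ c := length (filter (Nat.eqb 2) c).

Lemma sat_app c1 c' m : sat (c1 ++ c') m = sat c1 m && sat c' (skipn (length c1) m).
Proof.
  revert m; induction c1; intros m; simpl; auto.
  rewrite IHc1, andb_assoc. f_equal. destruct m; simpl; auto. destruct (length c1); auto.
Qed.

Lemma sat_base c m : Forall (fun x => x <= 1)%nat c -> length m = length c -> sat c m = all_gt m c.
Proof.
  intros HF; revert m; induction HF as [|x c Hx HF IH]; intros [|a m] Hl; simpl in *; try discriminate; auto.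
  rewrite IH by lia. f_equal. destruct x as [|[|x]]; auto; lia.
Qed.

Lemma lim_nonneg u l : Un_cv u l -> (forall n, 0 <= u n) -> 0 <= l.
Proof.
  intros H Hu. destruct (Rle_or_lt 0 l); auto. destruct (H (- l)) as [N HN]; [lra|].
  specialize (HN N (le_n _)). unfold R_dist in HN. specialize (Hu N).
  rewrite Rabs_pos_eq in HN by lra. lra.
Qed.

Lemma boxsum_nonneg d N p P : (forall m, 0 <= p m) -> 0 <= boxsum d N p P.
Proof. intros. unfold boxsum. apply sumR_nonneg. auto. Qed.

Section Conv.
Variable beta : nat -> R.
Variable d : nat.
Variable p : list nat -> R.
Hypothesis Hp : forall n, length n = d -> Un_cv (fun N => boxsum d N p (fun m => all_gt m n)) (Fbar beta n).

Lemma cv_sat j : forall c, length c = d -> Forall (fun x => x <= 2)%nat c -> cntEQ c = j ->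
  Un_cv (fun N => boxsum d N p (sat c)) (nabla j (seq_one_beta beta) (cntGT c)).
Proof.
  induction j; intros c Hl HF Hj.
  - rewrite nabla0.
    assert (HF1 : Forall (fun x => x <= 1)%nat c).
    { rewrite Forall_forall in *. intros x Hx. specialize (HF x Hx).
      destruct (Nat.eq_dec x 2); [|lia]. subst. unfold cntEQ in Hj.
      assert (In 2%nat (filter (Nat.eqb 2) c)) by (apply filter_In; auto).
      destruct (filter (Nat.eqb 2) c); simpl in *; [tauto|discriminate]. }
    assert (HFb : Fbar beta c = seq_one_beta beta (cntGT c)).
    { rewrite (Fbar_prod beta c 1). simpl. rewrite Rmult_1_l. f_equal. unfold cntL, cntGT.
      f_equal. apply filter_ext_in. intros x Hx. rewrite Forall_forall in HF1. specialize (HF1 x Hx).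
      destruct x as [|[|x]]; auto; lia.
      eapply Forall_impl; [|exact HF1]. intros; simpl in *; lia. }
    rewrite <- HFb. intros eps Heps. destruct (Hp c Hl eps Heps) as [N0 HN0]. exists N0. intros N HN.
    replace (boxsum d N p (sat c)) with (boxsum d N p (fun m => all_gt m c)); auto.
    unfold boxsum. f_equal. f_equal. apply filter_ext_in. intros m Hm. apply In_box in Hm.
    symmetry. apply sat_base; auto. lia.
  - assert (Hin : In 2%nat c).
    { unfold cntEQ in Hj. destruct (filter (Nat.eqb 2) c) eqn:E; [discriminate|].
      assert (In n (filter (Nat.eqb 2) c)) by (rewrite E; left; auto). apply filter_In in H.
      destruct H as [H1 H2]. apply Nat.eqb_eq in H2. subst. auto. }
    apply in_split in Hin. destruct Hin as [c1 [c2 ->]].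
    set (cF := c1 ++ 0%nat :: c2). set (cG := c1 ++ 1%nat :: c2).
    unfold cntEQ, cntGT in *. rewrite filter_app, length_app in Hj. simpl in Hj.
    assert (H1 : Un_cv (fun N => boxsum d N p (sat cF)) (nabla j (seq_one_beta beta) (cntGT (c1 ++ 2%nat :: c2)))).
    { replace (cntGT (c1 ++ 2%nat :: c2)) with (cntGT cF).
      - apply IHj.
        + unfold cF. rewrite length_app in *. simpl in *. lia.
        + unfold cF. apply Forall_app in HF. destruct HF as [Ha Hb]. inversion Hb. apply Forall_app. split; auto.
        + unfold cntEQ, cF. rewrite filter_app, length_app. simpl. lia.
      - unfold cntGT, cF. rewrite !filter_app, !length_app. auto. }
    assert (H2 : Un_cv (fun N => boxsum d N p (sat cG)) (nabla j (seq_one_beta beta) (S (cntGT (c1 ++ 2%nat :: c2))))).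
    { replace (S (cntGT (c1 ++ 2%nat :: c2))) with (cntGT cG).
      - apply IHj.
        + unfold cG. rewrite length_app in *. simpl in *. lia.
        + unfold cG. apply Forall_app in HF. destruct HF as [Ha Hb]. inversion Hb. apply Forall_app. split; auto.
        + unfold cntEQ, cG. rewrite filter_app, length_app. simpl. lia.
      - unfold cntGT, cG. rewrite !filter_app, !length_app. simpl. lia. }
    rewrite nabla_S. unfold cntGT at 1 in H1. unfold cntGT at 1 in H2.
    pose proof (CV_minus _ _ _ _ H1 H2) as H3.
    intros eps Heps. destruct (H3 eps Heps) as [N0 HN0]. exists N0. intros N HN.
    specialize (HN0 N HN). 
    replace (boxsum d N p (sat (c1 ++ 2%nat :: c2))) with (boxsum d N p (sat cF) - boxsum d N p (sat cG)); auto.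
    unfold boxsum. rewrite !sum_filter. rewrite <- sumR_minus. apply sumR_ext. intros m _.
    unfold cF, cG. rewrite !sat_app. cbn [sat].
    destruct (sat c1 m), (sat c2 (tl (skipn (length c1) m))), (hd O (skipn (length c1) m)) as [|[|a]];
      simpl; ring.
Qed.
End Conv.

Lemma len_filter_repeat (f : nat -> bool) x n : length (filter f (repeat x n)) = if f x then n else O.
Proof. induction n; simpl; [destruct (f x); auto|]. destruct (f x); simpl; auto. Qed.

Lemma conv_M beta : (forall d, (2 <= d)%nat -> is_discrete_survival d (Fbar beta)) -> M_inf (seq_one_beta beta).
Proof.
  intros H.
  assert (Hnab : forall j k, 0 <= nabla j (seq_one_beta beta) k).
  { intros j k. destruct (H (j + k + 2)%nat ltac:(lia)) as [p [Hp0 [_ Hp]]].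
    set (c := repeat 1%nat k ++ repeat 2%nat j ++ [0;0]%nat).
    assert (Hl : length c = (j + k + 2)%nat) by (unfold c; rewrite !length_app, !repeat_length; simpl; lia).
    assert (HF : Forall (fun x => x <= 2)%nat c).
    { apply Forall_forall. intros x Hx. unfold c in Hx. apply in_app_or in Hx. destruct Hx as [Hx|Hx].
      - apply repeat_spec in Hx; lia.
      - apply in_app_or in Hx. destruct Hx as [Hx|Hx]. + apply repeat_spec in Hx; lia. + simpl in Hx; lia. }
    assert (HE : cntEQ c = j) by (unfold c, cntEQ; rewrite !filter_app, !length_app, !len_filter_repeat; simpl; lia).
    assert (HG : cntGT c = k) by (unfold c, cntGT; rewrite !filter_app, !length_app, !len_filter_repeat; simpl; lia).
    assert (Hcv := cv_sat beta (j + k + 2) p Hp j c Hl HF HE).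
    rewrite HG in Hcv. apply (lim_nonneg _ _ Hcv). intros; apply boxsum_nonneg; auto. }
  split; [reflexivity|split; [|exact Hnab]].
  assert (Hb1 : seq_one_beta beta 1 <= 1).
  { pose proof (Hnab 1%nat 0%nat) as H1. rewrite nabla_S, !nabla0 in H1. simpl in H1 |- *. lra. }
  destruct (Rle_lt_or_eq_dec _ _ Hb1) as [|Heq]; auto. exfalso.
  destruct (H 2%nat ltac:(lia)) as [p [Hp0 [Htot Hp]]].
  destruct (Htot (1/4)) as [N HN]; [lra|].
  assert (HFN : Fbar beta [N; O] = 1).
  { rewrite (Fbar_prod beta _ N).
    - rewrite (prod_upto_ext N _ (fun _ => seq_one_beta beta 1)).
      + rewrite prod_upto_const, Heq. apply pow1.
      + intros k Hk. f_equal. unfold cntL. simpl.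
        replace (Nat.leb k N) with true by (symmetry; apply Nat.leb_le; lia).
        replace (Nat.leb k 0) with false by (symmetry; apply Nat.leb_gt; lia). auto.
    - constructor; [lia|constructor; [lia|constructor]]. }
  destruct (Hp [N; O] eq_refl (1/4)) as [N2 HN2]; [lra|].
  set (N' := max N N2).
  pose proof (HN N ltac:(lia)) as HNa. specialize (HN N' ltac:(unfold N'; lia)). specialize (HN2 N' ltac:(unfold N'; lia)).
  rewrite HFN in HN2. unfold R_dist in HN, HN2, HNa.
  apply Rabs_def2 in HN. apply Rabs_def2 in HN2. apply Rabs_def2 in HNa.
  assert (Hsplit : boxsum 2 N' p (fun _ => true) = boxsum 2 N' p (fun m => all_gt m [N; O]) +
     sumR (map (fun m => if all_gt m [N; O] then 0 else p m) (box 2 N'))).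
  { unfold boxsum. rewrite !sum_filter. rewrite <- sumR_plus. apply sumR_ext. intros m _.
    destruct (all_gt m [N; O]); ring. }
  assert (Hmono : sumR (map (fun m => if all_gt m [N; O] then 0 else p m) (box 2 N)) <=
                  sumR (map (fun m => if all_gt m [N; O] then 0 else p m) (box 2 N'))).
  { apply box_mono; [unfold N'; lia|]. intros m. destruct (all_gt m [N; O]); auto; lra. }
  assert (HN3 : sumR (map (fun m => if all_gt m [N; O] then 0 else p m) (box 2 N)) = boxsum 2 N p (fun _ => true)).
  { unfold boxsum. rewrite sum_filter. apply sumR_ext. intros m Hm. apply In_box in Hm.
    destruct Hm as [Hl HF]. destruct m as [|a [|b [|]]]; simpl in Hl; try discriminate.
    inversion HF; subst. simpl. replace (Nat.ltb N a) with false by (symmetry; apply Nat.ltb_ge; lia). auto. }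
  lra.
Qed.

Theorem corollary4p2 (beta : nat -> R) :
  ((forall d : nat, (2 <= d)%nat -> is_discrete_survival d (Fbar beta))
     <-> M_inf (seq_one_beta beta)) /\
  (M_inf (seq_one_beta beta) ->
     forall d : nat, (2 <= d)%nat -> inf_ext_exch_wsg d (Fbar beta)).
Proof.
  split; [split|].
  - apply conv_M.
  - intros HM d _. apply surv_Fbar; auto.
  - intros HM d _. apply inf_ext_Fbar; auto.
Qed.
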